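(* Let $p\in(0,1)$, $\gamma>0$, $B>0$, $w\in\mathbb{N}$. Then $\mathcal{T}_N^*$ is a strictly increasing function of $N\in\mathbb{N}$.
   Context: Logarithms are base 2. For an admissible (nonnegative, with sum at most $B$) sequence $(x_j)_{j\ge1}$, $$\mathcal{T}_\infty(x_1,x_2,\dots)=\sum_{k=1}^{w}p^2(1-p)^{k-1}\frac{k}{2}\log_2\!\Big(1+\gamma\frac{B}{k}\Big)+\sum_{j=1}^{\infty}p(1-p)^{j+w-1}\frac12\log_2(1+\gamma x_j)+\sum_{k=1}^{\infty}p^2(1-p)^{k+w-1}\frac{w}{2}\log_2\!\Big(1+\gamma\frac{B-\sum_{j=1}^{k}x_j}{w}\Big).$$ For $N\in\mathbb{N}$ and $\xi_1,\dots,\xi_N\ge0$ with $\sum_{j=1}^N\xi_j\le B$, define $\mathcal{T}_N(\xi_1,\dots,\xi_N)=\mathcal{T}_\infty(\xi_1,\dots,\xi_N,0,0,\dots)$, and let $\mathcal{T}_N^*$ be the supremum of $\mathcal{T}_N$ over this set. *)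

(* Defs.v *)
From Stdlib Require Import Reals.
From Coquelicot Require Import Coquelicot.
Open Scope R_scope.

Definition log2 (x : R) : R := ln x / ln 2.

(* partial sum x_1 + ... + x_k  (sequences are indexed from 1) *)
Definition psum (x : nat -> R) (k : nat) : R := sum_n_m x 1 k.

(* T_infinity(x_1, x_2, ...) ; x is read at indices 1, 2, 3, ... *)
Definition T_inf (p gamma B : R) (w : nat) (x : nat -> R) : R :=
  sum_n_m (fun k => p ^ 2 * (1 - p) ^ (k - 1) * (INR k / 2)
                    * log2 (1 + gamma * (B / INR k))) 1 w
  + Series (fun n => let j := S n in
              p * (1 - p) ^ (j + w - 1) * (1 / 2) * log2 (1 + gamma * x j))
  + Series (fun n => let k := S n in
              p ^ 2 * (1 - p) ^ (k + w - 1) * (INR w / 2)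
              * log2 (1 + gamma * ((B - psum x k) / INR w))).

Definition pad (N : nat) (xi : nat -> R) : nat -> R :=
  fun j => if Nat.leb j N then xi j else 0.

Definition T_N (p gamma B : R) (w N : nat) (xi : nat -> R) : R :=
  T_inf p gamma B w (pad N xi).

Definition feasible (B : R) (N : nat) (xi : nat -> R) : Prop :=
  (forall j, (1 <= j <= N)%nat -> 0 <= xi j) /\ psum xi N <= B.

Definition T_N_star (p gamma B : R) (w N : nat) : Rbar :=
  Lub_Rbar (fun y => exists xi, feasible B N xi /\ y = T_N p gamma B w N xi).

(* Main.v *)
Require Import Defs.
From Stdlib Require Import Reals Lra Lia Classical FunctionalExtensionality.
From Coquelicot Require Import Coquelicot.
Open Scope R_scope.

Fixpoint sm (f : nat -> R) (n : nat) : R :=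
  match n with O => 0 | S n' => sm f n' + f (S n') end.

Lemma sum_n_sm (a : nat -> R) (L : nat) :
  (1 <= L)%nat -> sum_n (fun n => a (S n)) (pred L) = sm a L.
Proof.
  intros HL. destruct L as [|L]; [lia|]. simpl. clear HL.
  induction L as [|L IH].
  - rewrite sum_O. simpl. lra.
  - rewrite sum_Sn, IH. simpl. unfold plus; simpl. reflexivity.
Qed.

Lemma psum_0 x : psum x 0 = 0.
Proof. unfold psum. rewrite sum_n_m_zero; [reflexivity|lia]. Qed.

Lemma psum_S x k : psum x (S k) = psum x k + x (S k).
Proof. unfold psum. rewrite sum_n_Sm; [reflexivity|lia]. Qed.

Lemma psum_const x N k : (forall j, (N < j)%nat -> x j = 0) -> (N <= k)%nat ->
  psum x k = psum x N.
Proof.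
  intros Hz Hk. induction Hk as [|k Hk IH]; [reflexivity|].
  rewrite psum_S, IH, Hz; [lra|lia].
Qed.

Lemma is_series_zero : is_series (fun _ : nat => 0) 0.
Proof.
  assert (H := is_series_scal_l 0 _ _ (is_series_geom (1/2) ltac:(rewrite Rabs_pos_eq; lra))).
  match type of H with is_series _ ?l => assert (E : l = 0) by (unfold scal; simpl; unfold mult; simpl; ring); rewrite E in H end.
  eapply is_series_ext; [|exact H]. intros n. simpl. unfold scal; simpl. unfold mult; simpl. ring.
Qed.

Section S.
Variables (p gamma B : R) (w : nat).

Definition Aw (j : nat) : R := p * (1 - p) ^ (j + w - 1) * (1 / 2).
Definition Bw (k : nat) : R := p ^ 2 * (1 - p) ^ (k + w - 1) * (INR w / 2).
Definition gg (y : R) : R := log2 (1 + gamma * (y / INR w)).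
Definition fterm (x : nat -> R) (j : nat) : R := Aw j * log2 (1 + gamma * x j).
Definition gterm (x : nat -> R) (k : nat) : R := Bw k * gg (B - psum x k).
Definition V (L : nat) (x : nat -> R) : R :=
  sm (fterm x) L + sm (gterm x) L + INR w * Aw (S L) * gg (B - psum x L).
Definition C0 : R := sum_n_m (fun k => p ^ 2 * (1 - p) ^ (k - 1) * (INR k / 2)
                    * log2 (1 + gamma * (B / INR k))) 1 w.

Lemma log2_1 : log2 1 = 0.
Proof. unfold log2. rewrite ln_1. lra. Qed.

Lemma closed_form (L : nat) (x : nat -> R) :
  0 < p < 1 -> (1 <= L)%nat -> (forall j, (L < j)%nat -> x j = 0) ->
  T_inf p gamma B w x = C0 + V L x.
Proof.
  intros Hp HL Hz. unfold T_inf, V, C0.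
  assert (E1 : Series (fun n =>
              p * (1 - p) ^ (S n + w - 1) * (1 / 2) * log2 (1 + gamma * x (S n)))
           = sm (fterm x) L).
  { apply is_series_unique.
    apply (is_series_decr_n _ L); [lia|].
    rewrite sum_n_sm with (a := fterm x); [|exact HL].
    match goal with |- is_series _ ?l => replace l with 0 by (unfold plus, opp; simpl; ring) end.
    eapply is_series_ext; [|apply is_series_zero].
    intros n. simpl. rewrite Hz; [|lia]. rewrite Rmult_0_r, Rplus_0_r, log2_1.
    ring_simplify. unfold plus, opp; simpl. ring. }
  assert (E2 : Series (fun n =>
              p ^ 2 * (1 - p) ^ (S n + w - 1) * (INR w / 2)
              * log2 (1 + gamma * ((B - psum x (S n)) / INR w)))
           = sm (gterm x) L + INR w * Aw (S L) * gg (B - psum x L)).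
  { apply is_series_unique.
    apply (is_series_decr_n _ L); [lia|].
    rewrite sum_n_sm with (a := gterm x); [|exact HL].
    set (c := p ^ 2 * (1 - p) ^ (L + w) * (INR w / 2) * gg (B - psum x L)).
    assert (H := is_series_scal_l c _ _ (is_series_geom (1 - p) ltac:(rewrite Rabs_pos_eq; lra))).
    eapply is_series_ext; [|eapply is_series_ext with (a := fun n => scal c ((1-p)^n)); [reflexivity|]].
    - intros n. simpl. unfold scal; simpl. unfold mult; simpl. unfold c.
      rewrite (psum_const x L (S (L+n)) Hz ltac:(lia)).
      replace (L + n + w - 0)%nat with ((L + w) + n)%nat by lia.
      rewrite !pow_add. unfold gg. ring.
    - match type of H with is_series _ ?l1 => match goal with |- is_series _ ?l2 => replace l2 with l1; [exact H|] end end.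
      unfold scal, plus, opp; simpl. unfold mult; simpl. unfold c, Aw.
      replace (S L + w - 1)%nat with (L + w)%nat by lia.
      field. lra. }
  rewrite E1, E2. ring.
Qed.
End S.

Lemma ln2_pos : 0 < ln 2.
Proof. rewrite <- ln_1. apply ln_increasing; lra. Qed.

Lemma ln_le_sub1 y : 0 < y -> ln y <= y - 1.
Proof.
  intros Hy. rewrite <- (ln_exp (y - 1)). apply ln_le; [exact Hy|].
  generalize (exp_ineq1_le (y - 1)). lra.
Qed.

Lemma ln_diff_le a b : 0 < a -> 0 < b -> ln b - ln a <= (b - a) / a.
Proof.
  intros Ha Hb. rewrite <- ln_div by lra.
  assert (H := ln_le_sub1 (b / a) ltac:(apply Rdiv_lt_0_compat; lra)).
  replace ((b - a) / a) with (b / a - 1) by (field; lra). exact H.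
Qed.

Lemma ln_diff_ge a b : 0 < a -> 0 < b -> (b - a) / b <= ln b - ln a.
Proof.
  intros Ha Hb. assert (H := ln_diff_le b a Hb Ha).
  replace ((b - a) / b) with (- ((a - b) / b)) by (field; lra). lra.
Qed.

Lemma lg_diff_le a b : 0 < a -> 0 < b -> log2 b - log2 a <= (b - a) / a / ln 2.
Proof.
  intros Ha Hb. unfold log2. assert (H := ln_diff_le a b Ha Hb). assert (H2 := ln2_pos).
  replace (ln b / ln 2 - ln a / ln 2) with ((ln b - ln a) / ln 2) by (field; lra).
  unfold Rdiv at 1 3. apply Rmult_le_compat_r; [left; apply Rinv_0_lt_compat; lra| exact H].
Qed.

Lemma lg_diff_ge a b : 0 < a -> 0 < b -> (b - a) / b / ln 2 <= log2 b - log2 a.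
Proof.
  intros Ha Hb. unfold log2. assert (H := ln_diff_ge a b Ha Hb). assert (H2 := ln2_pos).
  replace (ln b / ln 2 - ln a / ln 2) with ((ln b - ln a) / ln 2) by (field; lra).
  unfold Rdiv at 2 3. apply Rmult_le_compat_r; [left; apply Rinv_0_lt_compat; lra| exact H].
Qed.



Lemma caseA_real (a W g e rho r : R) :
  0 < a -> 1 <= W -> 0 < g -> 0 < e -> (W + 1) * e < rho -> rho <= r ->
  a / ln 2 * (g * e) * (1 / (1 + g * e) - 1 / (1 + g * ((rho - e) / W)))
  <= a * (log2 (1 + g * e) - log2 1)
     + W * a * (log2 (1 + g * ((r - e) / W)) - log2 (1 + g * (r / W))).
Proof.
  intros Ha HW Hg He Hrho Hr. assert (Hl := ln2_pos).
  assert (H1 := lg_diff_ge 1 (1 + g * e) ltac:(lra) ltac:(nra)).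
  assert (Hre : 0 < (r - e) / W) by (apply Rdiv_lt_0_compat; nra).
  assert (Hrw : 0 < r / W) by (apply Rdiv_lt_0_compat; nra).
  assert (H2 := lg_diff_le (1 + g * ((r - e) / W)) (1 + g * (r / W)) ltac:(nra) ltac:(nra)).
  replace (1 + g * e - 1) with (g * e) in H1 by ring.
  replace (1 + g * (r / W) - (1 + g * ((r - e) / W))) with (g * e / W) in H2 by (field; lra).
  assert (Hq : 1 / (1 + g * ((r - e) / W)) <= 1 / (1 + g * ((rho - e) / W))).
  { unfold Rdiv at 1 3. rewrite !Rmult_1_l. apply Rinv_le_contravar.
    - assert (0 < (rho - e)/W) by (apply Rdiv_lt_0_compat; nra). nra.
    - apply Rplus_le_compat_l. apply Rmult_le_compat_l; [lra|].
      unfold Rdiv. apply Rmult_le_compat_r; [left; apply Rinv_0_lt_compat; lra|lra]. }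
  set (b := 1 + g * ((r - e) / W)) in *.
  set (b0 := 1 + g * ((rho - e) / W)) in *.
  assert (Hb : 0 < b) by (unfold b; nra).
  (* W*a*(log diff) >= - W*a*(g e / W)/b/ln2 = - a g e / b / ln 2 *)
  assert (E : W * a * (g * e / W / b / ln 2) = a / ln 2 * (g * e) * (1 / b)) by (field; lra).
  assert (E2 : a * (g * e / (1 + g * e) / ln 2) = a / ln 2 * (g * e) * (1 / (1 + g * e))) by (field; nra).
  assert (Hpos : 0 < a / ln 2 * (g * e)) by (apply Rmult_lt_0_compat; [apply Rdiv_lt_0_compat|]; nra).
  assert (HWa : 0 < W * a) by nra.
  assert (Hx : a * (g * e / (1 + g * e) / ln 2) <= a * (log2 (1 + g * e) - log2 1)) by (apply Rmult_le_compat_l; lra).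
  assert (Hy : W * a * (log2 (1 + g * (r / W)) - log2 b) <= W * a * (g * e / W / b / ln 2)) by (apply Rmult_le_compat_l; lra).
  assert (Hz : a / ln 2 * (g * e) * (1 / b) <= a / ln 2 * (g * e) * (1 / b0)) by (apply Rmult_le_compat_l; lra).
  nra.
Qed.

Lemma caseB_real (aj aN1 d g t rho Bm S : R) :
  0 <= aN1 -> 0 < d -> d <= aj - aN1 -> 0 < g -> 0 < rho -> 4 * rho <= t -> t <= Bm ->
  (aj - aN1) * (g * rho) * (1 / (1 + g * (t / 4 + rho))) / ln 2 <= S ->
  g * rho / ln 2 * d * (g * rho / ((1 + g * Bm) * (1 + g * Bm)))
  <= aj * (log2 (1 + g * (t - rho)) - log2 (1 + g * t))
     + aN1 * (log2 (1 + g * rho) - log2 1) + S.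
Proof.
  intros HaN Hd Hdj Hg Hr Ht HB HS. assert (Hl := ln2_pos).
  assert (H1 := lg_diff_le (1 + g * (t - rho)) (1 + g * t) ltac:(nra) ltac:(nra)).
  assert (H2 := lg_diff_ge 1 (1 + g * rho) ltac:(lra) ltac:(nra)).
  replace (1 + g * t - (1 + g * (t - rho))) with (g * rho) in H1 by ring.
  replace (1 + g * rho - 1) with (g * rho) in H2 by ring.
  set (L := 1 / (1 + g * (t - rho))).
  set (E := 1 / (1 + g * rho)).
  set (q := 1 / (1 + g * (t / 4 + rho))).
  set (k := g * rho / ln 2).
  assert (Hk : 0 < k) by (unfold k; apply Rdiv_lt_0_compat; nra).
  assert (EL : L <= E).
  { unfold L, E, Rdiv. rewrite !Rmult_1_l. apply Rinv_le_contravar; nra. }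
  assert (qL : g * rho / ((1 + g * Bm) * (1 + g * Bm)) <= q - L).
  { unfold q, L.
    assert (P1 : 0 < 1 + g * (t / 4 + rho)) by nra.
    assert (P2 : 0 < 1 + g * (t - rho)) by nra.
    replace (1 / (1 + g * (t / 4 + rho)) - 1 / (1 + g * (t - rho)))
      with (g * (3 * t / 4 - 2 * rho) / ((1 + g * (t / 4 + rho)) * (1 + g * (t - rho))))
      by (field; split; lra).
    unfold Rdiv. apply Rmult_le_compat.
    - nra.
    - left. apply Rinv_0_lt_compat. nra.
    - nra.
    - apply Rinv_le_contravar; [nra|].
      apply Rmult_le_compat; nra. }
  assert (P2 : 0 < 1 + g * (t - rho)) by nra.
  assert (P3 : 0 < 1 + g * rho) by nra.
  assert (A1 : aj * (log2 (1 + g * (t - rho)) - log2 (1 + g * t)) >= - (aj * (k * L))).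
  { unfold k, L. assert (0 <= aj) by lra.
    assert (aj * (log2 (1 + g * t) - log2 (1 + g * (t - rho))) <= aj * (g * rho / (1 + g * (t - rho)) / ln 2))
      by (apply Rmult_le_compat_l; lra).
    replace (g * rho / ln 2 * (1 / (1 + g * (t - rho)))) with (g * rho / (1 + g * (t - rho)) / ln 2)
      by (field; split; lra). lra. }
  assert (A2 : aN1 * (log2 (1 + g * rho) - log2 1) >= aN1 * (k * E)).
  { unfold k, E.
    replace (g * rho / ln 2 * (1 / (1 + g * rho))) with (g * rho / (1 + g * rho) / ln 2)
      by (field; split; lra). apply Rle_ge, Rmult_le_compat_l; lra. }
  assert (A3 : S >= (aj - aN1) * (k * q)).
  { unfold k, q. replace ((aj - aN1) * (g * rho / ln 2 * (1 / (1 + g * (t / 4 + rho))))) with ((aj - aN1) * (g * rho) * (1 / (1 + g * (t / 4 + rho))) / ln 2)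
      by (field; split; apply Rgt_not_eq; nra). lra. }
  (* total >= k*((aj-aN1)(q-L) + aN1 (E - L)) >= k * d * (q - L) *)
  assert (T1 : k * d * (g * rho / ((1 + g * Bm) * (1 + g * Bm))) <= k * ((aj - aN1) * (q - L))).
  { rewrite Rmult_assoc. apply Rmult_le_compat_l; [lra|].
    apply Rmult_le_compat; try lra.
    apply Rlt_le, Rdiv_lt_0_compat; nra. }
  assert (T2 : 0 <= k * (aN1 * (E - L))) by (apply Rmult_le_pos; [lra|apply Rmult_le_pos; lra]).
  unfold k in *. nra.
Qed.

Lemma sm_ext f g n : (forall j, (1 <= j <= n)%nat -> f j = g j) -> sm f n = sm g n.
Proof. induction n; intros H; simpl; [reflexivity|]. rewrite IHn, H; [reflexivity|lia|intros; apply H; lia]. Qed.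

Lemma sm_le f g n : (forall j, (1 <= j <= n)%nat -> f j <= g j) -> sm f n <= sm g n.
Proof. induction n; intros H; simpl; [lra|]. assert (H1 := H (S n) ltac:(lia)). assert (sm f n <= sm g n) by (apply IHn; intros; apply H; lia). lra. Qed.

Lemma sm_minus f g n : sm f n - sm g n = sm (fun j => f j - g j) n.
Proof. induction n; simpl; [lra|]. rewrite <- IHn. ring. Qed.

Lemma sm_scal c f n : sm (fun j => c * f j) n = c * sm f n.
Proof. induction n; simpl; [ring|]. rewrite IHn. ring. Qed.

Lemma sm_zero f n : (forall j, (1 <= j <= n)%nat -> f j = 0) -> sm f n = 0.
Proof.
  intros H. rewrite (sm_ext f (fun _ => 0)); [|exact H]. clear H.
  induction n; simpl; [lra|]. rewrite IHn; lra.
Qed.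

Lemma sm_single f n j0 : (1 <= j0 <= n)%nat -> (forall j, (1 <= j <= n)%nat -> j <> j0 -> f j = 0) -> sm f n = f j0.
Proof.
  induction n; intros Hj H; [lia|]. simpl.
  destruct (Nat.eq_dec j0 (S n)) as [->|Hne].
  - rewrite sm_zero; [ring|]. intros j Hj'. apply H; lia.
  - rewrite IHn; [rewrite (H (S n)); [ring|lia|lia]|lia|]. intros j Hj' Hne'. apply H; lia.
Qed.

Lemma psum_ext x y k : (forall j, (1 <= j <= k)%nat -> x j = y j) -> psum x k = psum y k.
Proof. induction k; intros H; [rewrite !psum_0; reflexivity|]. rewrite !psum_S, IHk, H; [reflexivity|lia|intros; apply H; lia]. Qed.

Lemma psum_mono x L k m : (forall j, (1 <= j <= L)%nat -> 0 <= x j) -> (k <= m <= L)%nat -> psum x k <= psum x m.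
Proof.
  intros H [Hkm HmL]. induction Hkm; [lra|]. rewrite psum_S. assert (0 <= x (S m)) by (apply H; lia).
  assert (psum x k <= psum x m) by (apply IHHkm; lia). lra.
Qed.

Lemma psum_nonneg x L k : (forall j, (1 <= j <= L)%nat -> 0 <= x j) -> (k <= L)%nat -> 0 <= psum x k.
Proof. intros H Hk. rewrite <- (psum_0 x). apply (psum_mono x L); [exact H|lia]. Qed.

Lemma x_le_psum x L j : (forall j, (1 <= j <= L)%nat -> 0 <= x j) -> (1 <= j <= L)%nat -> x j <= psum x L.
Proof.
  intros H Hj. destruct j as [|j]; [lia|].
  assert (HH : psum x (S j) <= psum x L) by (apply (psum_mono x L); [exact H|lia]).
  rewrite psum_S in HH. assert (0 <= psum x j) by (apply (psum_nonneg x L); [exact H|lia]). lra.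
Qed.

Lemma ln_nonpos z : z <= 0 -> ln z = 0.
Proof. intros Hz. unfold ln. case Rlt_dec; intros h; [exfalso; lra|reflexivity]. Qed.

Lemma log2_upper z Z : z <= Z -> 1 <= Z -> log2 z <= log2 Z.
Proof.
  intros H1 H2. unfold log2. assert (Hl := ln2_pos).
  unfold Rdiv. apply Rmult_le_compat_r; [left; apply Rinv_0_lt_compat; lra|].
  destruct (Rlt_dec 0 z).
  - apply ln_le; lra.
  - rewrite ln_nonpos by lra. rewrite <- ln_1. apply ln_le; lra.
Qed.

Lemma exists_switch (P : nat -> Prop) N : P 0%nat -> ~ P N -> exists n, (n < N)%nat /\ P n /\ ~ P (S n).
Proof.
  induction N; intros H0 HN; [contradiction|].
  destruct (classic (P N)) as [HP|HP].
  - exists N. repeat split; auto.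
  - destruct (IHN H0 HP) as [n [Hn [Hp Hq]]]. exists n. repeat split; auto.
Qed.

Section T.
Variables (p gamma B : R) (w : nat).
Hypothesis Hp : 0 < p < 1.
Hypothesis Hw : (1 <= w)%nat.

Lemma INRw_ge1 : 1 <= INR w.
Proof. apply (le_INR 1 w) in Hw. simpl in Hw. exact Hw. Qed.

Lemma Aw_S k : Aw p w (S k) = (1 - p) * Aw p w k.
Proof. unfold Aw. replace (S k + w - 1)%nat with (S (k + w - 1)) by lia. generalize (k + w - 1)%nat; intros e. simpl. ring. Qed.

Lemma Aw_pos k : 0 < Aw p w k.
Proof. unfold Aw. apply Rmult_lt_0_compat; [apply Rmult_lt_0_compat; [lra|apply pow_lt; lra]|lra]. Qed.

Lemma Bw_tele k : Bw p w k = INR w * (Aw p w k - Aw p w (S k)).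
Proof. rewrite Aw_S. unfold Bw, Aw. generalize (k + w - 1)%nat; intros e. generalize (INR w); intros W. field. Qed.

Lemma Bw_pos k : 0 <= Bw p w k.
Proof. rewrite Bw_tele, Aw_S. assert (H := Aw_pos k). assert (H2 := INRw_ge1).
  apply Rmult_le_pos; nra. Qed.

Lemma Aw_mono j N : (j <= N)%nat -> Aw p w N <= Aw p w j.
Proof.
  induction 1; [lra|]. rewrite Aw_S. assert (H0 := Aw_pos m). nra.
Qed.

Lemma sm_S f n : sm f (S n) = sm f n + f (S n).
Proof. reflexivity. Qed.

Lemma tele_sum j0 n : (1 <= j0 <= S n)%nat ->
  sm (fun k => if Nat.leb j0 k then Bw p w k else 0) n = INR w * (Aw p w j0 - Aw p w (S n)).
Proof.
  induction n; intros Hj.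
  - simpl. replace j0 with 1%nat by lia. ring.
  - rewrite sm_S. cbv beta. destruct (Nat.eq_dec j0 (S (S n))) as [->|Hne].
    + rewrite sm_zero. * replace (Nat.leb (S (S n)) (S n)) with false by (symmetry; apply Nat.leb_gt; lia). ring.
      * intros j Hj'. destruct (Nat.leb (S (S n)) j) eqn:E; [apply Nat.leb_le in E; lia|reflexivity].
    + rewrite IHn by lia. assert (E : Nat.leb j0 (S n) = true) by (apply Nat.leb_le; lia).
      rewrite E, Bw_tele. ring.
Qed.

Lemma V_upper L x : 0 < gamma -> 0 < B ->
  (forall j, (1 <= j <= L)%nat -> 0 <= x j) -> psum x L <= B ->
  V p gamma B w L x <= (sm (Aw p w) L + sm (Bw p w) L + INR w * Aw p w (S L)) * log2 (1 + gamma * B).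
Proof.
  intros Hg HB Hx Hs. unfold V.
  assert (HW := INRw_ge1).
  assert (HZ : 1 <= 1 + gamma * B) by nra.
  assert (Hgg : forall k, (k <= L)%nat -> gg gamma w (B - psum x k) <= log2 (1 + gamma * B)).
  { intros k Hk. unfold gg. apply log2_upper; [|exact HZ].
    assert (0 <= psum x k) by (apply (psum_nonneg x L); auto).
    apply Rplus_le_compat_l, Rmult_le_compat_l; [lra|].
    apply (Rmult_le_reg_r (INR w)); [lra|]. unfold Rdiv. rewrite Rmult_assoc, Rinv_l by lra. nra. }
  rewrite !Rmult_plus_distr_r.
  repeat apply Rplus_le_compat.
  - rewrite Rmult_comm, <- sm_scal. apply sm_le. intros j Hj. unfold fterm.
    rewrite (Rmult_comm (log2 (1 + gamma * B))). apply Rmult_le_compat_l; [apply Rlt_le, Aw_pos|].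
    apply log2_upper; [|exact HZ]. assert (x j <= psum x L) by (apply x_le_psum; auto). nra.
  - rewrite Rmult_comm, <- sm_scal. apply sm_le. intros j Hj. unfold gterm.
    rewrite (Rmult_comm (log2 (1 + gamma * B))). apply Rmult_le_compat_l; [apply Bw_pos|]. apply Hgg; lia.
  - apply Rmult_le_compat_l; [apply Rmult_le_pos; [lra|apply Rlt_le, Aw_pos]|]. apply Hgg; lia.
Qed.

End T.

Section U.
Variables (p gamma B : R) (w : nat).
Hypothesis Hp : 0 < p < 1.
Hypothesis Hw : (1 <= w)%nat.
Hypothesis Hg : 0 < gamma.
Hypothesis HB : 0 < B.

Lemma V_split N y : V p gamma B w (S N) y =
  sm (fterm p gamma w y) N + fterm p gamma w y (S N) + sm (gterm p gamma B w y) N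
  + INR w * Aw p w (S N) * gg gamma w (B - psum y (S N)).
Proof.
  unfold V. rewrite !sm_S. unfold gterm at 2. rewrite Bw_tele by exact Hw. ring.
Qed.

Definition epsA (rho : R) := rho / (2 * (INR w + 1)).
Definition deltaA (N : nat) (rho : R) :=
  Aw p w (S N) / ln 2 * (gamma * epsA rho) *
  (1 / (1 + gamma * epsA rho) - 1 / (1 + gamma * ((rho - epsA rho) / INR w))).

Lemma caseA x N rho : (1 <= N)%nat -> (forall j, (N < j)%nat -> x j = 0) ->
  0 < rho -> rho <= B - psum x N ->
  V p gamma B w (S N) x + deltaA N rho
  <= V p gamma B w (S N) (fun j => if Nat.eqb j (S N) then epsA rho else x j).
Proof.
  intros HN Hz Hr Hrb. set (x' := fun j => if Nat.eqb j (S N) then epsA rho else x j).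
  assert (HW := INRw_ge1 w Hw).
  rewrite !V_split.
  assert (E1 : sm (fterm p gamma w x') N = sm (fterm p gamma w x) N).
  { apply sm_ext. intros j Hj. unfold fterm, x'. replace (Nat.eqb j (S N)) with false; [reflexivity|].
    symmetry. apply Nat.eqb_neq. lia. }
  assert (Ep : forall k, (k <= N)%nat -> psum x' k = psum x k).
  { intros k Hk. apply psum_ext. intros j Hj. unfold x'. replace (Nat.eqb j (S N)) with false; [reflexivity|].
    symmetry. apply Nat.eqb_neq. lia. }
  assert (E2 : sm (gterm p gamma B w x') N = sm (gterm p gamma B w x) N).
  { apply sm_ext. intros j Hj. unfold gterm. rewrite Ep; [reflexivity|lia]. }
  assert (E3 : fterm p gamma w x' (S N) = Aw p w (S N) * log2 (1 + gamma * epsA rho)).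
  { unfold fterm, x'. rewrite Nat.eqb_refl. reflexivity. }
  assert (E4 : fterm p gamma w x (S N) = Aw p w (S N) * log2 1).
  { unfold fterm. rewrite Hz by lia. f_equal. f_equal. ring. }
  assert (E5 : psum x' (S N) = psum x N + epsA rho).
  { rewrite psum_S, Ep by lia. unfold x'. rewrite Nat.eqb_refl. reflexivity. }
  assert (E6 : psum x (S N) = psum x N).
  { rewrite psum_S, Hz by lia. ring. }
  rewrite E1, E2, E3, E4, E5, E6.
  assert (He : 0 < epsA rho) by (unfold epsA; apply Rdiv_lt_0_compat; lra).
  assert (Hwe : (INR w + 1) * epsA rho < rho).
  { unfold epsA. replace ((INR w + 1) * (rho / (2 * (INR w + 1)))) with (rho / 2) by (field; lra). lra. }
  assert (H := caseA_real (Aw p w (S N)) (INR w) gamma (epsA rho) rho (B - psum x N)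
                 (Aw_pos p w Hp (S N)) HW Hg He Hwe Hrb).
  unfold deltaA, gg.
  replace (B - (psum x N + epsA rho)) with (B - psum x N - epsA rho) by ring.
  lra.
Qed.


Definition deltaB (N : nat) (rho : R) :=
  gamma * rho / ln 2 * (p * Aw p w N) * (gamma * rho / ((1 + gamma * B) * (1 + gamma * B))).

Lemma caseB x N j0 rho : (1 <= j0 <= N)%nat -> (forall j, (N < j)%nat -> x j = 0) ->
  (forall j, (1 <= j <= N)%nat -> 0 <= x j) -> psum x N <= B ->
  0 < rho -> 4 * rho <= x j0 -> B - psum x j0 <= x j0 / 4 ->
  V p gamma B w (S N) x + deltaB N rho
  <= V p gamma B w (S N) (fun j => if Nat.eqb j j0 then x j0 - rho
                                   else if Nat.eqb j (S N) then rho else x j).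
Proof.
  intros Hj0 Hz Hx Hs Hr Ht Hu.
  set (x' := fun j => if Nat.eqb j j0 then x j0 - rho else if Nat.eqb j (S N) then rho else x j).
  assert (HW := INRw_ge1 w Hw).
  assert (Hl := ln2_pos).
  set (t := x j0) in *.
  assert (Ep : forall k, (k <= N)%nat -> psum x' k = psum x k - (if Nat.leb j0 k then rho else 0)).
  { induction k; intros Hk.
    - rewrite !psum_0. replace (Nat.leb j0 0) with false by (symmetry; apply Nat.leb_gt; lia). ring.
    - rewrite !psum_S, IHk by lia. unfold x'.
      destruct (Nat.eq_dec (S k) j0) as [E|E].
      + rewrite E, Nat.eqb_refl. rewrite E in *.
        replace (Nat.leb j0 k) with false by (symmetry; apply Nat.leb_gt; lia).
        rewrite Nat.leb_refl. unfold t. ring.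
      + replace (Nat.eqb (S k) j0) with false by (symmetry; apply Nat.eqb_neq; lia).
        replace (Nat.eqb (S k) (S N)) with false by (symmetry; apply Nat.eqb_neq; lia).
        replace (Nat.leb j0 (S k)) with (Nat.leb j0 k).
        * ring.
        * destruct (Nat.leb j0 k) eqn:E1; destruct (Nat.leb j0 (S k)) eqn:E2; try reflexivity.
          -- apply Nat.leb_le in E1. apply Nat.leb_gt in E2. lia.
          -- apply Nat.leb_gt in E1. apply Nat.leb_le in E2. lia. }
  assert (EpS : psum x' (S N) = psum x (S N)).
  { rewrite !psum_S, Ep by lia. unfold x'.
    replace (Nat.eqb (S N) j0) with false by (symmetry; apply Nat.eqb_neq; lia).
    rewrite Nat.eqb_refl, Hz by lia.
    replace (Nat.leb j0 N) with true by (symmetry; apply Nat.leb_le; lia). ring. }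
  rewrite !V_split, EpS.
  assert (F1 : sm (fterm p gamma w x') N - sm (fterm p gamma w x) N
               = Aw p w j0 * (log2 (1 + gamma * (t - rho)) - log2 (1 + gamma * t))).
  { rewrite sm_minus. rewrite (sm_single _ N j0 Hj0).
    - unfold fterm, x'. rewrite Nat.eqb_refl. unfold t. ring.
    - intros j Hj Hne. unfold fterm, x'.
      replace (Nat.eqb j j0) with false by (symmetry; apply Nat.eqb_neq; lia).
      replace (Nat.eqb j (S N)) with false by (symmetry; apply Nat.eqb_neq; lia). ring. }
  assert (F2 : fterm p gamma w x' (S N) - fterm p gamma w x (S N)
               = Aw p w (S N) * (log2 (1 + gamma * rho) - log2 1)).
  { unfold fterm, x'.
    replace (Nat.eqb (S N) j0) with false by (symmetry; apply Nat.eqb_neq; lia).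
    rewrite Nat.eqb_refl, Hz by lia. replace (1 + gamma * 0) with 1 by ring. ring. }
  set (D := gamma * rho / INR w * (1 / (1 + gamma * (t / 4 + rho))) / ln 2).
  assert (G1 : sm (fun k => (if Nat.leb j0 k then Bw p w k else 0) * D) N
               <= sm (gterm p gamma B w x') N - sm (gterm p gamma B w x) N).
  { rewrite sm_minus. apply sm_le. intros k Hk. unfold gterm. rewrite Ep by lia.
    destruct (Nat.leb j0 k) eqn:E.
    - apply Nat.leb_le in E.
      rewrite <- Rmult_minus_distr_l. apply Rmult_le_compat_l; [apply Bw_pos; auto|].
      assert (Hk1 : psum x j0 <= psum x k) by (apply (psum_mono x N); auto; lia).
      assert (Hk2 : psum x k <= psum x N) by (apply (psum_mono x N); auto; lia).
      set (uk := B - psum x k).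
      replace (B - (psum x k - rho)) with (uk + rho) by (unfold uk; ring).
      unfold gg.
      assert (Ha : 0 < 1 + gamma * (uk / INR w)).
      { assert (0 <= uk / INR w) by (apply Rmult_le_pos; [unfold uk; lra|left; apply Rinv_0_lt_compat; lra]). nra. }
      assert (Hb : 0 < 1 + gamma * ((uk + rho) / INR w)).
      { assert (0 <= (uk + rho) / INR w) by (apply Rmult_le_pos; [unfold uk; lra|left; apply Rinv_0_lt_compat; lra]). nra. }
      assert (H := lg_diff_ge _ _ Ha Hb).
      eapply Rle_trans; [|exact H].
      replace (1 + gamma * ((uk + rho) / INR w) - (1 + gamma * (uk / INR w))) with (gamma * rho / INR w)
        by (field; lra).
      unfold D. unfold Rdiv at 3 4. apply Rmult_le_compat_r; [left; apply Rinv_0_lt_compat; lra|].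
      unfold Rdiv at 1 2. rewrite Rmult_1_l. apply Rmult_le_compat_l.
      + apply Rmult_le_pos; [nra|left; apply Rinv_0_lt_compat; lra].
      + apply Rinv_le_contravar; [exact Hb|].
        apply Rplus_le_compat_l, Rmult_le_compat_l; [lra|].
        assert ((uk + rho) / INR w <= uk + rho).
        { apply (Rmult_le_reg_r (INR w)); [lra|]. unfold Rdiv. rewrite Rmult_assoc, Rinv_l by lra.
          assert (0 <= uk + rho) by (unfold uk; lra). nra. }
        unfold uk in *. lra.
    - apply Nat.leb_gt in E.
      rewrite Rmult_0_l. replace (psum x k - 0) with (psum x k) by ring. lra. }
  assert (G2 : sm (fun k => (if Nat.leb j0 k then Bw p w k else 0) * D) N
               = (Aw p w j0 - Aw p w (S N)) * (gamma * rho) * (1 / (1 + gamma * (t / 4 + rho))) / ln 2).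
  { rewrite (sm_ext _ (fun k => D * (if Nat.leb j0 k then Bw p w k else 0))) by (intros; ring).
    rewrite sm_scal, tele_sum by (auto; lia). unfold D. field.
    repeat split; apply Rgt_not_eq; nra. }
  assert (Hd : 0 < p * Aw p w N) by (apply Rmult_lt_0_compat; [lra|apply Aw_pos; auto]).
  assert (Hdj : p * Aw p w N <= Aw p w j0 - Aw p w (S N)).
  { rewrite Aw_S by auto. assert (Aw p w N <= Aw p w j0) by (apply Aw_mono; auto; lia). nra. }
  assert (HtB : t <= B) by (assert (t <= psum x N) by (apply x_le_psum; auto); lra).
  assert (HaN : 0 <= Aw p w (S N)) by (apply Rlt_le, Aw_pos; auto).
  assert (H := caseB_real (Aw p w j0) (Aw p w (S N)) (p * Aw p w N) gamma t rho B
                 (sm (gterm p gamma B w x') N - sm (gterm p gamma B w x) N)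
                 HaN Hd Hdj Hg Hr Ht HtB ltac:(lra)).
  unfold deltaB. lra.
Qed.


Lemma psumB x N j0 rho : (1 <= j0 <= N)%nat -> (forall j, (N < j)%nat -> x j = 0) ->
  psum (fun j => if Nat.eqb j j0 then x j0 - rho
                 else if Nat.eqb j (S N) then rho else x j) (S N) = psum x N.
Proof.
  intros Hj0 Hz.
  set (x' := fun j => if Nat.eqb j j0 then x j0 - rho else if Nat.eqb j (S N) then rho else x j).
  assert (Ep : forall k, (k <= N)%nat -> psum x' k = psum x k - (if Nat.leb j0 k then rho else 0)).
  { induction k; intros Hk.
    - rewrite !psum_0. replace (Nat.leb j0 0) with false by (symmetry; apply Nat.leb_gt; lia). ring.
    - rewrite !psum_S, IHk by lia. unfold x'.
      destruct (Nat.eq_dec (S k) j0) as [E|E].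
      + rewrite E, Nat.eqb_refl. rewrite E in *.
        replace (Nat.leb j0 k) with false by (symmetry; apply Nat.leb_gt; lia).
        rewrite Nat.leb_refl. ring.
      + replace (Nat.eqb (S k) j0) with false by (symmetry; apply Nat.eqb_neq; lia).
        replace (Nat.eqb (S k) (S N)) with false by (symmetry; apply Nat.eqb_neq; lia).
        replace (Nat.leb j0 (S k)) with (Nat.leb j0 k).
        * ring.
        * destruct (Nat.leb j0 k) eqn:E1; destruct (Nat.leb j0 (S k)) eqn:E2; try reflexivity.
          -- apply Nat.leb_le in E1. apply Nat.leb_gt in E2. lia.
          -- apply Nat.leb_gt in E1. apply Nat.leb_le in E2. lia. }
  rewrite !psum_S, Ep by lia. unfold x'.
  replace (Nat.eqb (S N) j0) with false by (symmetry; apply Nat.eqb_neq; lia).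
  rewrite Nat.eqb_refl.
  replace (Nat.leb j0 N) with true by (symmetry; apply Nat.leb_le; lia). ring.
Qed.

End U.

Lemma pad_id M K y : (K <= M)%nat -> (forall j, (K < j)%nat -> y j = 0) -> pad M y = y.
Proof.
  intros HK Hz. apply functional_extensionality. intros j. unfold pad.
  destruct (Nat.leb j M) eqn:E; [reflexivity|]. apply Nat.leb_gt in E. symmetry. apply Hz. lia.
Qed.

Lemma psum_zero k : psum (fun _ => 0) k = 0.
Proof. induction k; [apply psum_0|]. rewrite psum_S, IHk. ring. Qed.

Lemma pow5_pos n : 0 < 5 ^ n.
Proof. apply pow_lt. lra. Qed.

Lemma pow5_mono m n : (m <= n)%nat -> 5 ^ m <= 5 ^ n.
Proof. induction 1; [lra|]. simpl. assert (H1 := pow5_pos m0). lra. Qed.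

Section M.
Variables (p gamma B : R) (w : nat).
Hypothesis Hp : 0 < p < 1.
Hypothesis Hw : (1 <= w)%nat.
Hypothesis Hg : 0 < gamma.
Hypothesis HB : 0 < B.

Lemma improve N M : (1 <= N)%nat -> (N < M)%nat ->
  exists d, 0 < d /\ forall xi, feasible B N xi ->
    exists xi', feasible B M xi' /\ T_N p gamma B w N xi + d <= T_N p gamma B w M xi'.
Proof.
  intros HN HM.
  set (rho := B / 5 ^ N).
  assert (Hrho : 0 < rho) by (unfold rho; apply Rdiv_lt_0_compat; [lra|apply pow5_pos]).
  assert (HW := INRw_ge1 w Hw). assert (Hl := ln2_pos).
  exists (Rmin (deltaA p gamma w N rho) (deltaB p gamma B w N rho)). split.
  { apply Rmin_glb_lt.
    - unfold deltaA. set (e := epsA w rho).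
      assert (He : 0 < e) by (unfold e, epsA; apply Rdiv_lt_0_compat; lra).
      assert (Hwe : INR w * e < rho - e).
      { unfold e, epsA. replace (rho / (2 * (INR w + 1))) with (rho / 2 / (INR w + 1)) by (field; lra).
        assert (H0 : (INR w + 1) * (rho / 2 / (INR w + 1)) = rho / 2) by (field; lra). nra. }
      apply Rmult_lt_0_compat; [apply Rmult_lt_0_compat; [apply Rdiv_lt_0_compat; [apply Aw_pos; auto|lra]|nra]|].
      assert (0 < INR w * e) by nra.
      assert (Hq : 0 < (rho - e) / INR w) by (apply Rdiv_lt_0_compat; lra).
      assert (Hq2 : gamma * e < gamma * ((rho - e) / INR w)).
      { apply Rmult_lt_compat_l; [lra|]. apply (Rmult_lt_reg_r (INR w)); [lra|].
        unfold Rdiv. rewrite Rmult_assoc, Rinv_l by lra. lra. }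
      assert (0 < gamma * e) by nra. unfold Rdiv. rewrite !Rmult_1_l. apply Rlt_Rminus. apply Rinv_lt_contravar; [apply Rmult_lt_0_compat; lra|lra].
    - unfold deltaB. assert (0 < Aw p w N) by (apply Aw_pos; auto).
      assert (0 < (1 + gamma * B) * (1 + gamma * B)) by nra.
      apply Rmult_lt_0_compat; [apply Rmult_lt_0_compat|].
      + apply Rdiv_lt_0_compat; nra.
      + nra.
      + apply Rdiv_lt_0_compat; nra. }
  intros xi [Hxi Hsum].
  set (x := pad N xi).
  assert (Hz : forall j, (N < j)%nat -> x j = 0).
  { intros j Hj. unfold x, pad. replace (Nat.leb j N) with false by (symmetry; apply Nat.leb_gt; lia). reflexivity. }
  assert (Hx : forall j, (1 <= j <= N)%nat -> 0 <= x j).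
  { intros j Hj. unfold x, pad. replace (Nat.leb j N) with true by (symmetry; apply Nat.leb_le; lia). apply Hxi; lia. }
  assert (Hs : psum x N <= B).
  { rewrite (psum_ext x xi); [exact Hsum|]. intros j Hj. unfold x, pad.
    replace (Nat.leb j N) with true by (symmetry; apply Nat.leb_le; lia). reflexivity. }
  assert (Tx : T_N p gamma B w N xi = C0 p gamma B w + V p gamma B w (S N) x).
  { unfold T_N. fold x. apply closed_form; [exact Hp|lia|]. intros j Hj; apply Hz; lia. }
  rewrite Tx.
  destruct (Rle_dec rho (B - psum x N)) as [HA|HBc].
  -
    set (x' := fun j => if Nat.eqb j (S N) then epsA w rho else x j).
    assert (He : 0 < epsA w rho) by (unfold epsA; apply Rdiv_lt_0_compat; lra).
    assert (He2 : epsA w rho <= rho).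
    { unfold epsA. apply (Rmult_le_reg_r (2 * (INR w + 1))); [lra|].
      unfold Rdiv. rewrite Rmult_assoc, Rinv_l by lra. nra. }
    assert (Hz' : forall j, (S N < j)%nat -> x' j = 0).
    { intros j Hj. unfold x'. replace (Nat.eqb j (S N)) with false by (symmetry; apply Nat.eqb_neq; lia). apply Hz; lia. }
    assert (Hps : psum x' (S N) = psum x N + epsA w rho).
    { rewrite psum_S. rewrite (psum_ext x' x).
      - unfold x'. rewrite Nat.eqb_refl. reflexivity.
      - intros j Hj. unfold x'. replace (Nat.eqb j (S N)) with false by (symmetry; apply Nat.eqb_neq; lia). reflexivity. }
    exists x'. split.
    + split.
      * intros j Hj. unfold x'. destruct (Nat.eqb j (S N)); [lra|].
        destruct (Compare_dec.le_lt_dec j N); [apply Hx; lia|rewrite Hz; [lra|lia]].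
      * rewrite (psum_const x' (S N) M Hz' ltac:(lia)). lra.
    + unfold T_N. rewrite (pad_id M (S N) x' ltac:(lia) Hz').
      rewrite (closed_form p gamma B w (S N) x' Hp ltac:(lia) Hz').
      assert (H := caseA p gamma B w Hp Hw Hg x N rho HN Hz Hrho HA). fold x' in H.
      assert (Rmin (deltaA p gamma w N rho) (deltaB p gamma B w N rho) <= deltaA p gamma w N rho) by apply Rmin_l.
      lra.
  -
    apply Rnot_le_lt in HBc.
    destruct (exists_switch (fun n => B / 5 ^ n <= B - psum x n) N) as [n [Hn [Hp0 Hp1]]].
    { simpl. rewrite psum_0. lra. }
    { fold rho. lra. }
    apply Rnot_le_lt in Hp1.
    set (j0 := S n).
    set (t := x j0).
    assert (Ht : t = (B - psum x n) - (B - psum x (S n))) by (unfold t, j0; rewrite psum_S; ring).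
    assert (Hu1 : 0 <= B - psum x (S n)).
    { assert (psum x (S n) <= psum x N) by (apply (psum_mono x N); auto; lia). lra. }
    assert (H5 : B / 5 ^ S n = B / 5 ^ n / 5) by (simpl; field; assert (0 < 5 ^ n) by apply pow5_pos; repeat split; apply Rgt_not_eq; lra).
    assert (Hr5 : rho <= B / 5 ^ S n).
    { unfold rho, Rdiv. apply Rmult_le_compat_l; [lra|]. apply Rinv_le_contravar; [apply pow5_pos|].
      apply pow5_mono. lia. }
    assert (Ht4 : 4 * rho <= t) by (rewrite H5 in Hp1, Hr5; lra).
    assert (Hu : B - psum x j0 <= t / 4) by (unfold j0; rewrite H5 in Hp1; lra).
    set (x' := fun j => if Nat.eqb j j0 then x j0 - rho else if Nat.eqb j (S N) then rho else x j).
    assert (Hj0 : (1 <= j0 <= N)%nat) by (unfold j0; lia).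
    assert (Hz' : forall j, (S N < j)%nat -> x' j = 0).
    { intros j Hj. unfold x'.
      replace (Nat.eqb j j0) with false by (symmetry; apply Nat.eqb_neq; lia).
      replace (Nat.eqb j (S N)) with false by (symmetry; apply Nat.eqb_neq; lia). apply Hz; lia. }
    exists x'. split.
    + split.
      * intros j Hj. unfold x'. destruct (Nat.eqb j j0); [fold t; lra|]. destruct (Nat.eqb j (S N)); [lra|].
        destruct (Compare_dec.le_lt_dec j N); [apply Hx; lia|rewrite Hz; [lra|lia]].
      * rewrite (psum_const x' (S N) M Hz' ltac:(lia)). unfold x'. rewrite (psumB w Hw x N j0 rho Hj0 Hz). exact Hs.
    + unfold T_N. rewrite (pad_id M (S N) x' ltac:(lia) Hz').
      rewrite (closed_form p gamma B w (S N) x' Hp ltac:(lia) Hz').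
      assert (H := caseB p gamma B w Hp Hw Hg x N j0 rho Hj0 Hz Hx Hs Hrho Ht4 Hu). fold x' in H.
      assert (Rmin (deltaA p gamma w N rho) (deltaB p gamma B w N rho) <= deltaB p gamma B w N rho) by apply Rmin_r.
      lra.
Qed.

End M.

Theorem corollary2 (p gamma B : R) (w : nat) :
  0 < p < 1 -> 0 < gamma -> 0 < B -> (1 <= w)%nat ->
  forall N M : nat, (1 <= N)%nat -> (N < M)%nat ->
    Rbar_lt (T_N_star p gamma B w N) (T_N_star p gamma B w M).
Proof.
  intros Hp Hg HB Hw N M HN HM.
  destruct (improve p gamma B w Hp Hw Hg HB N M HN HM) as [d [Hd Himp]].
  set (U := C0 p gamma B w + (sm (Aw p w) M + sm (Bw p w) M + INR w * Aw p w (S M)) * log2 (1 + gamma * B)).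
  assert (Hbound : forall xi, feasible B M xi -> T_N p gamma B w M xi <= U).
  { intros xi [Hxi Hs]. unfold T_N.
    assert (Hz : forall j, (M < j)%nat -> pad M xi j = 0).
    { intros j Hj. unfold pad. replace (Nat.leb j M) with false by (symmetry; apply Nat.leb_gt; lia). reflexivity. }
    rewrite (closed_form p gamma B w M (pad M xi) Hp ltac:(lia) Hz).
    unfold U. apply Rplus_le_compat_l. apply V_upper; auto.
    - intros j Hj. unfold pad. replace (Nat.leb j M) with true by (symmetry; apply Nat.leb_le; lia). apply Hxi; lia.
    - rewrite (psum_ext _ xi); [exact Hs|]. intros j Hj. unfold pad.
      replace (Nat.leb j M) with true by (symmetry; apply Nat.leb_le; lia). reflexivity. }
  unfold T_N_star.
  set (EM := fun y => exists xi, feasible B M xi /\ y = T_N p gamma B w M xi).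
  set (EN := fun y => exists xi, feasible B N xi /\ y = T_N p gamma B w N xi).
  destruct (Lub_Rbar_correct EM) as [Hub Hleast].
  assert (H1 : Rbar_le (Lub_Rbar EM) U).
  { apply Hleast. intros y [xi [Hf ->]]. simpl. apply Hbound; auto. }
  assert (H2 : Rbar_le (T_N p gamma B w M (fun _ => 0)) (Lub_Rbar EM)).
  { apply Hub. exists (fun _ => 0). split; [|reflexivity]. split; [intros; lra|]. rewrite psum_zero. lra. }
  destruct (Lub_Rbar EM) as [m| |] eqn:E; simpl in H1, H2; try contradiction.
  try rewrite E in Hub.
  apply Rbar_le_lt_trans with (Finite (m - d)); [|simpl; lra].
  apply (proj2 (Lub_Rbar_correct EN)). intros y [xi [Hf ->]]. simpl.
  destruct (Himp xi Hf) as [xi' [Hf' Hle]].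
  assert (H3 : Rbar_le (T_N p gamma B w M xi') m) by (apply Hub; exists xi'; auto).
  simpl in H3. lra.
Qed.
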